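(* Consider the network game with symmetric adjacency matrix $A\in\{0,1\}^{n\times n}$, parameter $\beta>0$ with $\beta\lambda_1(A)<1$, and standalone value vector $b\in\mathbb{R}^n_{\ge0}$. Let $C>\max(\|b\|^2,1)$ and let $y^*$ be an optimal intervention of budget $C$. Let $\gamma\in[-1,1]$. Then for every $y\in\mathbb{R}^n$ with $\|y\|^2=C$ and $\rho(y,y^* )>\gamma$, the competitive ratio satisfies $$\frac{W(y)}{W(y^* )}\ge 1-4\sqrt{2(1-\gamma)}.$$
   Context: Network game: agents $1,\dots,n$ on an undirected graph with symmetric adjacency matrix $A$; agent $i$ chooses $a_i\in\mathbb{R}$ and has utility $u_i(a)=b_ia_i-\tfrac12a_i^2+\beta\sum_jA_{ij}a_ia_j$. Let $M=I-\beta A$. When the spectral radius of $\beta A$ is below $1$, the unique Nash equilibrium is $a^*=M^{-1}b$ and the social welfare at equilibrium is $\tfrac12(a^* )^\top a^*$. An intervention is a vector $y$ replacing $b$ by $b+y$ at cost $\|y\|^2$; $W(y)=\tfrac12\|M^{-1}(b+y)\|^2$ is the equilibrium welfare after intervention $y$. The optimal intervention of budget $C$ is $y^*\in\arg\max_{\|x\|=\sqrt C}W(x)$, and the competitive ratio of $y$ is $W(y)/W(y^* )$. $\lambda_1(A)$ is the largest eigenvalue of $A$. The cosine similarity of nonzero vectors is $\rho(z,y)=\frac{z\cdot y}{\|z\|\|y\|}$. $\|\cdot\|$ is the Euclidean norm. *)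

(* Defs.v *)
From HB Require Import structures.
From mathcomp Require Import all_boot all_order all_algebra.
From mathcomp Require Import all_classical all_reals.
Set Implicit Arguments. Unset Strict Implicit. Unset Printing Implicit Defensive.
Import Order.TTheory GRing.Theory Num.Theory.
Local Open Scope ring_scope.

Definition dotv (R : realType) (n : nat) (u v : 'cV[R]_n) : R :=
  \sum_(i < n) u i 0 * v i 0.

Definition normv (R : realType) (n : nat) (v : 'cV[R]_n) : R :=
  Num.sqrt (dotv v v).

Definition cosine_sim (R : realType) (n : nat) (z y : 'cV[R]_n) : R :=
  dotv z y / (normv z * normv y).

Definition adjacency01 (R : realType) (n : nat) (A : 'M[R]_n) : Prop :=
  A^T = A /\ forall i j, A i j = 0 \/ A i j = 1.

Definition is_lambda1 (R : realType) (n : nat) (A : 'M[R]_n) (l : R) : Prop :=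
  eigenvalue A l /\ forall m, eigenvalue A m -> m <= l.

Definition Mmat (R : realType) (n : nat) (beta : R) (A : 'M[R]_n) : 'M[R]_n :=
  1%:M - beta *: A.

Definition welfare (R : realType) (n : nat) (beta : R) (A : 'M[R]_n)
    (b y : 'cV[R]_n) : R :=
  let a := invmx (Mmat beta A) *m (b + y) in (normv a) ^+ 2 / 2.

Definition optimal_intervention (R : realType) (n : nat) (beta : R)
    (A : 'M[R]_n) (b : 'cV[R]_n) (C : R) (ys : 'cV[R]_n) : Prop :=
  (normv ys) ^+ 2 = C /\
  forall x : 'cV[R]_n, (normv x) ^+ 2 = C -> welfare beta A b x <= welfare beta A b ys.

(* Main.v *)
Require Import Defs.
From HB Require Import structures.
From mathcomp Require Import all_boot all_order all_algebra.
From mathcomp Require Import all_classical all_reals.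
From mathcomp Require Import ring lra.
Import Order.TTheory GRing.Theory Num.Theory.
Local Open Scope ring_scope.

Section Aux.
Set Implicit Arguments. Unset Strict Implicit.
Variables (R : realType) (n : nat).
Implicit Types u v w : 'cV[R]_n.

Lemma dotvC u v : dotv u v = dotv v u.
Proof. by rewrite /dotv; apply: eq_bigr => i _; rewrite mulrC. Qed.

Lemma dotvDl u v w : dotv (u + v) w = dotv u w + dotv v w.
Proof. by rewrite /dotv -big_split; apply: eq_bigr => i _; rewrite mxE mulrDl. Qed.

Lemma dotvDr u v w : dotv w (u + v) = dotv w u + dotv w v.
Proof. by rewrite dotvC dotvDl !(dotvC w). Qed.

Lemma dotvZl (k : R) u v : dotv (k *: u) v = k * dotv u v.
Proof. by rewrite /dotv mulr_sumr; apply: eq_bigr => i _; rewrite mxE mulrA. Qed.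

Lemma dotvZr (k : R) u v : dotv v (k *: u) = k * dotv v u.
Proof. by rewrite dotvC dotvZl dotvC. Qed.

Lemma dotvNl u v : dotv (- u) v = - dotv u v.
Proof. by rewrite -scaleN1r dotvZl mulN1r. Qed.

Lemma dotvNr u v : dotv v (- u) = - dotv v u.
Proof. by rewrite dotvC dotvNl dotvC. Qed.

Lemma dotv0 : dotv (0 : 'cV[R]_n) 0 = 0.
Proof. by rewrite /dotv big1 // => i _; rewrite mxE mul0r. Qed.

Lemma dotv_ge0 u : 0 <= dotv u u.
Proof. by apply: sumr_ge0 => i _; rewrite -expr2 sqr_ge0. Qed.

Lemma dotv_eq0 u : dotv u u = 0 -> u = 0.
Proof.
move=> /eqP; rewrite psumr_eq0 => [/allP H|i _]; last by rewrite -expr2 sqr_ge0.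
apply/matrixP => i j; rewrite ord1 mxE.
have := H i (mem_index_enum _); rewrite /= -expr2 sqrf_eq0 => /eqP //.
Qed.

Lemma normv2 u : normv u ^+ 2 = dotv u u.
Proof. by rewrite /normv sqr_sqrtr // dotv_ge0. Qed.

Lemma CS u v : dotv u v ^+ 2 <= dotv u u * dotv v v.
Proof.
have [Q0|Qn0] := eqVneq (dotv v v) 0.
  rewrite (dotv_eq0 Q0) /dotv [X in X ^+ 2]big1 ?expr0n ?mulr_ge0 ?dotv_ge0 //.
  by move=> i _; rewrite mxE mulr0.
have Qp : 0 < dotv v v by rewrite lt_def Qn0 dotv_ge0.
set k := dotv u v / dotv v v.
have := dotv_ge0 (u - k *: v).
rewrite !(dotvDl, dotvDr, dotvNl, dotvNr, dotvZl, dotvZr) (dotvC v u).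
rewrite /k => H.
have E : dotv u u - dotv u v ^+ 2 / dotv v v >= 0.
  move: H; set a := dotv u u; set b := dotv u v; set c := dotv v v.
  suff -> : a - b / c * b + (- (b / c * b) - b / c * - (b / c * c)) = a - b ^+ 2 / c by [].
  by field.
rewrite subr_ge0 ler_pdivrMr // in E.
Qed.

End Aux.

Theorem mainTheorem3 (R : realType) (n : nat) (A : 'M[R]_n) (beta l1 : R)
    (b : 'cV[R]_n) (C gamma : R) (ys : 'cV[R]_n) :
  adjacency01 A ->
  0 < beta ->
  is_lambda1 A l1 ->
  beta * l1 < 1 ->
  (forall i, 0 <= b i 0) ->
  Num.max ((normv b) ^+ 2) 1 < C ->
  optimal_intervention beta A b C ys ->
  -1 <= gamma <= 1 ->
  forall y : 'cV[R]_n,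
    (normv y) ^+ 2 = C ->
    gamma < cosine_sim y ys ->
    1 - 4 * Num.sqrt (2 * (1 - gamma)) <= welfare beta A b y / welfare beta A b ys.
Proof.
move=> [AT _] bpos [eigA maxl] bl1 _ Cgt [ysC opt] /andP[gl gu] y yC cosg.
have C1 : 1 < C by move: Cgt; rewrite gt_max => /andP[].
have Cb : dotv b b < C by move: Cgt; rewrite gt_max normv2 => /andP[].
rewrite normv2 in yC; rewrite normv2 in ysC.
set M := Mmat beta A.
have Mu : M \in unitmx.
  rewrite -row_free_unit; apply: inj_row_free => v vM.
  apply/eqP; apply/negPn/negP => vn0.
  have : eigenvalue A beta^-1.
    apply/eigenvalueP; exists v => //.
    move: vM; rewrite /M /Mmat mulmxBr mul_mx_scalar -scalemxAr scale1r.
    move=> /eqP; rewrite subr_eq0 => /eqP E.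
    by rewrite {2}E scalerA mulVf ?scale1r // gt_eqF.
  move=> /maxl H.
  have := ler_wpM2l (ltW bpos) H; rewrite mulfV ?gt_eqF //; lra.
set B := invmx M.
have Bu : B \in unitmx by rewrite unitmx_inv.
have Binj : forall v : 'cV[R]_n, B *m v = 0 -> v = 0.
  by move=> v Bv; rewrite -(mulKmx Bu v) Bv mulmx0.
have Wdef : forall x, welfare beta A b x = dotv (B *m (b + x)) (B *m (b + x)) / 2.
  by move=> x; rewrite /welfare normv2.
set p := B *m (b + ys); set P := dotv p p.
have optP : forall x, dotv x x = C -> dotv (B *m (b + x)) (B *m (b + x)) <= P.
  move=> x xC; have := opt x; rewrite !Wdef normv2 -/p -/P => /(_ xC); lra.
have Ppos : 0 < P.
  have : 0 < dotv (B *m (b + y)) (B *m (b + y)).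
    rewrite lt_def dotv_ge0 andbT; apply/eqP => /dotv_eq0 /Binj /eqP.
    rewrite addr_eq0 => /eqP E.
    move: Cb; rewrite E dotvNl dotvNr opprK; lra.
  have := optP y yC; lra.
have bound : forall d, C * dotv (B *m d) (B *m d) <= P * dotv d d.
  move=> d; have [D0|Dn0] := eqVneq (dotv d d) 0.
    by rewrite (dotv_eq0 D0) mulmx0 dotv0 !mulr0.
  have Dp : 0 < dotv d d by rewrite lt_def Dn0 dotv_ge0.
  set D := dotv d d.
  set r := Num.sqrt (C / D).
  have r2 : r ^+ 2 = C / D by rewrite sqr_sqrtr // divr_ge0 //; [lra|exact: ltW].
  set bd := dotv (B *m b) (B *m d).
  pose s := if 0 <= bd then r else - r.
  have s2 : s ^+ 2 = C / D by rewrite /s; case: ifP => _; rewrite ?sqrrN r2.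
  have sbd : 0 <= s * bd.
    rewrite /s; case: ifP => h.
      by rewrite mulr_ge0 // sqrtr_ge0.
    by rewrite mulNr -mulrN mulr_ge0 ?sqrtr_ge0 // oppr_ge0 ltW // ltNge h.
  have xC : dotv (s *: d) (s *: d) = C.
    rewrite dotvZl dotvZr mulrA -expr2 s2 /D mulfVK //.
  have := optP _ xC.
  rewrite mulmxDr -scalemxAr !(dotvDl, dotvDr, dotvZl, dotvZr) -/bd.
  rewrite (dotvC (B *m d) (B *m b)) -/bd mulrA -expr2 s2.
  have := dotv_ge0 (B *m b) => h1 h2.
  have h3 : C / D * dotv (B *m d) (B *m d) <= P by lra.
  by move: h3; rewrite mulrAC ler_pdivrMr.
set d := y - ys.
have Ebd : b + y = (b + ys) + d by rewrite /d addrACA subrr addr0.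
set q := B *m d; set Q := dotv q q.
have Ey : B *m (b + y) = p + q by rewrite Ebd mulmxDr.
have Dexp : dotv d d = 2 * C - 2 * dotv y ys.
  rewrite /d !(dotvDl, dotvDr, dotvNl, dotvNr) (dotvC ys y) yC ysC; lra.
have cosE : cosine_sim y ys = dotv y ys / C.
  rewrite /cosine_sim; congr (_ / _).
  have -> : normv ys = normv y by rewrite /normv yC ysC.
  by rewrite -expr2 normv2.
move: cosg; rewrite cosE ltr_pdivlMr; last lra.
move=> cosg.
have DC : dotv d d <= 2 * C * (1 - gamma) by rewrite Dexp; lra.
have hb := bound d; rewrite -/q -/Q in hb.
have QP : Q <= P * (2 * (1 - gamma)).
  have : C * Q <= C * (P * (2 * (1 - gamma))).
    apply: (le_trans hb).
    have := ler_wpM2l (ltW Ppos) DC; lra.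
  by rewrite ler_pM2l //; lra.
set t := Num.sqrt (2 * (1 - gamma)).
have t0 : 0 <= t by rewrite sqrtr_ge0.
have t2 : t ^+ 2 = 2 * (1 - gamma) by rewrite sqr_sqrtr //; lra.
set f := Num.sqrt P; set g := Num.sqrt Q.
have f2 : f ^+ 2 = P by rewrite sqr_sqrtr // ltW.
have g2 : g ^+ 2 = Q by rewrite sqr_sqrtr // dotv_ge0.
have f0 : 0 < f by rewrite sqrtr_gt0.
have g0 : 0 <= g by rewrite sqrtr_ge0.
have gtf : g <= t * f.
  have : Num.sqrt Q <= Num.sqrt ((t * f) ^+ 2).
    by rewrite ler_sqrt ?sqr_ge0 // exprMn t2 f2 mulrC.
  by rewrite sqrtr_sqr ger0_norm // mulr_ge0 // ltW.
have pqb : - (f * g) <= dotv p q.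
  have : Num.sqrt (dotv p q ^+ 2) <= Num.sqrt ((f * g) ^+ 2).
    by rewrite ler_sqrt ?sqr_ge0 // exprMn f2 g2 CS.
  rewrite !sqrtr_sqr (ger0_norm (mulr_ge0 (ltW f0) g0)) => /ler_normlP [h _].
  lra.
rewrite !Wdef Ey -/p -/P !(dotvDl, dotvDr) (dotvC q p) -/Q.
rewrite ler_pdivlMr; last lra.
rewrite -f2 -g2.
have : f * g <= t * f ^+ 2.
  have := ler_wpM2l (ltW f0) gtf; rewrite expr2; lra.
have : 0 <= t * f ^+ 2 by rewrite mulr_ge0 // sqr_ge0.
have : 0 <= g ^+ 2 by rewrite sqr_ge0.
move=> h1 h2 h3; have e : dotv p p = f ^+ 2 by rewrite f2.
rewrite e; move: pqb; clearbody t f g; generalize (dotv p q) => pq; lra.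
Qed.
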